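(* Let $B$, $\mathcal{U}=\{U_j\}_{j=1}^n$, $\{\varphi_j\}$, $q$, $\eta\in Z^1(\mathcal{N}(\mathcal{U});\mathbb{Z}_q)$ and $P_\eta$ be as below. Define $f:B\to L^n_q$ by \[ f(b)=\left[\sqrt{\varphi_1(b)}\,\zeta_q^{\eta_{j1}}:\cdots:\sqrt{\varphi_n(b)}\,\zeta_q^{\eta_{jn}}\right]\qquad\text{for } b\in U_j, \] with the convention that the $k$-th entry is $0$ if $U_j\cap U_k=\emptyset$. Then $f$ is well defined (independent of the choice of $j$ with $b\in U_j$), continuous, and classifies $P_\eta$: the principal $\mathbb{Z}_q$-bundle $P_\eta\to B$ is isomorphic to the pullback bundle $f^*(S^{2n-1})=\{(b,z)\in B\times S^{2n-1}: f(b)=p(z)\}\to B$, where $p:S^{2n-1}\to L^n_q$ is the quotient map. In particular, composing with the inclusion $L^n_q\subset L^\infty_q$, $f$ is a classifying map for $P_\eta$.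
   Context: $\zeta_q=e^{2\pi i/q}$. $\mathbb{Z}_q$ acts on $S^{2n-1}\subset\mathbb{C}^n$ by $z\cdot g=\zeta_q^g z$; the Lens space is $L^n_q=S^{2n-1}/\mathbb{Z}_q$ with quotient map $p$, and $[a_1:\cdots:a_n]$ denotes the class of $(a_1,\ldots,a_n)\in S^{2n-1}$ in $L^n_q$. $L^\infty_q=S^\infty/\mathbb{Z}_q$ similarly. $B$ is a topological space, $\mathcal{U}$ an open cover of $B$, $\{\varphi_j\}$ a partition of unity dominated by $\mathcal{U}$ (continuous $\varphi_j:B\to[0,1]$, $\sum_j\varphi_j\equiv1$, $\varphi_j=0$ outside $U_j$). The nerve $\mathcal{N}(\mathcal{U})$ has vertices $\{1,\ldots,n\}$ and simplices the index sets with nonempty common intersection. $\eta\in Z^1(\mathcal{N}(\mathcal{U});\mathbb{Z}_q)$ assigns $\eta_{jk}\in\mathbb{Z}_q$ to each ordered pair with $U_j\cap U_k\ne\emptyset$, with $\eta_{jj}=0$, $\eta_{kj}=-\eta_{jk}$, $\eta_{jk}+\eta_{kl}=\eta_{jl}$ whenever $U_j\cap U_k\cap U_l\ne\emptyset$. $P_\eta$ is the quotient of $\bigsqcup_j U_j\times\{j\}\times\mathbb{Z}_q$ by $(b,j,g)\sim(b,k,g+\eta_{jk})$ for $b\in U_j\cap U_k$, with projection $[b,j,g]\mapsto b$ and right action $[b,j,g]\cdot m=[b,j,g+m]$. Two principal $\mathbb{Z}_q$-bundles over $B$ are isomorphic if there is a $\mathbb{Z}_q$-equivariant homeomorphism of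 total spaces commuting with the projections. *)

(* Defs.v *)
From Stdlib Require Import Reals Lra Lia Arith Relations ClassicalEpsilon.
Open Scope R_scope.

Definition topology (X : Type) := (X -> Prop) -> Prop.

Definition is_topology {X : Type} (T : topology X) : Prop :=
  T (fun _ => True) /\
  (forall U V, T U -> T V -> T (fun x => U x /\ V x)) /\
  (forall F : (X -> Prop) -> Prop,
     (forall U, F U -> T U) -> T (fun x => exists U, F U /\ U x)).

Definition continuous {X Y : Type} (TX : topology X) (TY : topology Y)
  (f : X -> Y) : Prop := forall V, TY V -> TX (fun x => V (f x)).

Definition R_top : topology R :=
  fun U => forall x, U x -> exists eps, 0 < eps /\
    forall y, Rabs (y - x) < eps -> U y.

Definition subspace_top {X : Type} (T : topology X) (P : X -> Prop)
  : topology {x : X | P x} :=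
  fun V => exists W, T W /\ forall y, V y <-> W (proj1_sig y).

Definition prod_top {X Y : Type} (TX : topology X) (TY : topology Y)
  : topology (X * Y) :=
  fun W => forall x, W x -> exists O1 O2, TX O1 /\ TY O2 /\
    O1 (fst x) /\ O2 (snd x) /\
    forall y, O1 (fst y) -> O2 (snd y) -> W y.

Definition quotient_top {X Y : Type} (TX : topology X) (p : X -> Y)
  : topology Y := fun V => TX (fun x => V (p x)).

Definition Zq (q : nat) := { g : nat | (g < q)%nat }.

Lemma zq_add_lt (q : nat) (g m : Zq q) :
  ((proj1_sig g + proj1_sig m) mod q < q)%nat.
Proof. destruct g as [g Hg]; simpl. apply Nat.mod_upper_bound. lia. Qed.

Definition zq_add {q : nat} (g m : Zq q) : Zq q :=
  exist _ ((proj1_sig g + proj1_sig m) mod q)%nat (zq_add_lt q g m).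

Definition C := (R * R)%type.
Definition C0 : C := (0, 0).
Definition Cmul (a b : C) : C :=
  (fst a * fst b - snd a * snd b, fst a * snd b + snd a * fst b).
Definition Cscale (r : R) (a : C) : C := (r * fst a, r * snd a).
Definition Cnorm2 (a : C) : R := fst a ^ 2 + snd a ^ 2.

Definition zeta_pow (q g : nat) : C :=
  (cos (2 * PI * INR g / INR q), sin (2 * PI * INR g / INR q)).

(* vectors: sequences of complex numbers; C^n = those vanishing from index n on *)
Definition Vec := nat -> C.
Definition Vsub (v w : Vec) : Vec :=
  fun k => (fst (v k) - fst (w k), snd (v k) - snd (w k)).

Fixpoint rsum (n : nat) (f : nat -> R) : R :=
  match n with O => 0 | S m => rsum m f + f m end.

Lemma rsum_ext n f g : (forall k, (k < n)%nat -> f k = g k) -> rsum n f = rsum n g.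
Proof.
  induction n; intros H; simpl; [reflexivity|].
  rewrite IHn by (intros; apply H; lia). rewrite H by lia. reflexivity.
Qed.

Definition on_sphere (n : nat) (v : Vec) : Prop :=
  (forall k, (n <= k)%nat -> v k = C0) /\
  rsum n (fun k => Cnorm2 (v k)) = 1.

Definition Sphere (n : nat) := { v : Vec | on_sphere n v }.

Definition sphere_top (n : nat) : topology (Sphere n) :=
  fun U => forall z, U z -> exists eps, 0 < eps /\
    forall w, sqrt (rsum n (fun k => Cnorm2 (Vsub (proj1_sig w) (proj1_sig z) k))) < eps
              -> U w.

Definition rot (q g : nat) (v : Vec) : Vec := fun k => Cmul (zeta_pow q g) (v k).

Lemma Cnorm2_rot q g c : Cnorm2 (Cmul (zeta_pow q g) c) = Cnorm2 c.
Proof.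
  unfold Cnorm2, Cmul, zeta_pow; simpl.
  set (t := 2 * PI * INR g / INR q).
  pose proof (sin2_cos2 t) as H. unfold Rsqr in H.
  destruct c as [x y]; simpl.
  transitivity ((sin t * sin t + cos t * cos t) * (x ^ 2 + y ^ 2)); [ring|].
  rewrite H; ring.
Qed.

Lemma on_sphere_rot n q g v : on_sphere n v -> on_sphere n (rot q g v).
Proof.
  intros [H1 H2]; split.
  - intros k Hk. unfold rot. rewrite H1 by exact Hk. unfold Cmul, C0; simpl.
    f_equal; ring.
  - rewrite <- H2. apply rsum_ext. intros k _. unfold rot. apply Cnorm2_rot.
Qed.

Definition sph_act {n q : nat} (z : Sphere n) (g : Zq q) : Sphere n :=
  exist _ (rot q (proj1_sig g) (proj1_sig z))
        (on_sphere_rot n q (proj1_sig g) _ (proj2_sig z)).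

(* S^infinity = union of the S^{2m-1}, with the weak (colimit) topology *)
Definition on_sphere_inf (v : Vec) : Prop := exists m, on_sphere m v.
Definition SphereInf := { v : Vec | on_sphere_inf v }.
Definition sph_incl {m : nat} (z : Sphere m) : SphereInf :=
  exist _ (proj1_sig z) (ex_intro _ m (proj2_sig z)).
Definition sphinf_top : topology SphereInf :=
  fun U => forall m, sphere_top m (fun z : Sphere m => U (sph_incl z)).

Lemma on_sphere_inf_rot q g v : on_sphere_inf v -> on_sphere_inf (rot q g v).
Proof. intros [m H]. exists m. apply on_sphere_rot, H. Qed.

Definition sphinf_act {q : nat} (z : SphereInf) (g : Zq q) : SphereInf :=
  exist _ (rot q (proj1_sig g) (proj1_sig z))
        (on_sphere_inf_rot q (proj1_sig g) _ (proj2_sig z)).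

Definition orbit {E : Type} {q : nat} (act : E -> Zq q -> E) (z : E) : E -> Prop :=
  fun w => exists g, w = act z g.
Definition OrbSpace {E : Type} {q : nat} (act : E -> Zq q -> E) :=
  { O : E -> Prop | exists z, O = orbit act z }.
Definition orb_map {E : Type} {q : nat} (act : E -> Zq q -> E) (z : E) : OrbSpace act :=
  exist _ (orbit act z) (ex_intro _ z eq_refl).
Definition orb_rep {E : Type} {q : nat} {act : E -> Zq q -> E} (x : OrbSpace act) : E :=
  proj1_sig (constructive_indefinite_description _ (proj2_sig x)).

Definition Lens (n q : nat) := OrbSpace (@sph_act n q).
Definition lens_p (n q : nat) : Sphere n -> Lens n q := orb_map (@sph_act n q).
Definition lens_top (n q : nat) : topology (Lens n q) :=
  quotient_top (sphere_top n) (lens_p n q).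

Definition LensInf (q : nat) := OrbSpace (@sphinf_act q).
Definition lensinf_p (q : nat) : SphereInf -> LensInf q := orb_map (@sphinf_act q).
Definition lensinf_top (q : nat) : topology (LensInf q) :=
  quotient_top sphinf_top (lensinf_p q).

Definition lens_incl {n q : nat} (x : Lens n q) : LensInf q :=
  lensinf_p q (sph_incl (orb_rep x)).

Definition Pullback {B E L : Type} (f : B -> L) (p : E -> L) :=
  { x : B * E | f (fst x) = p (snd x) }.
Definition pullback_top {B E L : Type} (TB : topology B) (TE : topology E)
  (f : B -> L) (p : E -> L) : topology (Pullback f p) :=
  subspace_top (prod_top TB TE) (fun x => f (fst x) = p (snd x)).

(* P --projP--> B (right Z_q-action actP) is isomorphic to f^*(E) = {(b,z) | f b = p z}
   (Z_q acting on the second factor via actE): an equivariant homeomorphism of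
   total spaces commuting with the projections. *)
Definition iso_to_pullback {B P E L : Type} {q : nat}
  (TB : topology B) (TP : topology P) (projP : P -> B) (actP : P -> Zq q -> P)
  (TE : topology E) (actE : E -> Zq q -> E) (p : E -> L) (f : B -> L) : Prop :=
  exists (h : P -> Pullback f p) (k : Pullback f p -> P),
    (forall x, k (h x) = x) /\ (forall y, h (k y) = y) /\
    continuous TP (pullback_top TB TE f p) h /\
    continuous (pullback_top TB TE f p) TP k /\
    (forall x, fst (proj1_sig (h x)) = projP x) /\
    (forall x m, proj1_sig (h (actP x m)) =
                 (fst (proj1_sig (h x)), actE (snd (proj1_sig (h x))) m)).

(* disjoint union  |_|_j U_j x {j} x Z_q  (indices j = 0..n-1) *)
Definition Tot (B : Type) (n q : nat) (U : nat -> B -> Prop) :=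
  { t : B * nat * Zq q | (snd (fst t) < n)%nat /\ U (snd (fst t)) (fst (fst t)) }.

(* each U_j with the subspace topology, Z_q discrete *)
Definition tot_top {B : Type} (TB : topology B) (n q : nat) (U : nat -> B -> Prop)
  : topology (Tot B n q U) :=
  fun W => forall (j : nat) (g : Zq q) (Hj : (j < n)%nat),
    exists O, TB O /\ forall b (Hb : U j b),
      (W (exist _ (b, j, g) (conj Hj Hb)) <-> O b).

(* (b,j,g) ~ (b,k,g + eta_jk) *)
Definition glue_rel {B : Type} {n q : nat} {U : nat -> B -> Prop}
  (eta : nat -> nat -> Zq q) (t t' : Tot B n q U) : Prop :=
  fst (fst (proj1_sig t)) = fst (fst (proj1_sig t')) /\
  proj1_sig (snd (proj1_sig t')) =
    ((proj1_sig (snd (proj1_sig t)) +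
      proj1_sig (eta (snd (fst (proj1_sig t))) (snd (fst (proj1_sig t'))))) mod q)%nat.

Definition glue_eq {B : Type} {n q : nat} {U : nat -> B -> Prop}
  (eta : nat -> nat -> Zq q) : relation (Tot B n q U) :=
  clos_refl_sym_trans _ (glue_rel eta).

Definition Peta {B : Type} (n q : nat) (U : nat -> B -> Prop) (eta : nat -> nat -> Zq q) :=
  { S : Tot B n q U -> Prop | exists t, S = glue_eq eta t }.

Definition peta_cls {B : Type} {n q : nat} {U : nat -> B -> Prop}
  (eta : nat -> nat -> Zq q) (t : Tot B n q U) : Peta n q U eta :=
  exist _ (glue_eq eta t) (ex_intro _ t eq_refl).

Definition peta_top {B : Type} (TB : topology B) (n q : nat) (U : nat -> B -> Prop)
  (eta : nat -> nat -> Zq q) : topology (Peta n q U eta) :=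
  quotient_top (tot_top TB n q U) (peta_cls eta).

Definition peta_rep {B : Type} {n q : nat} {U : nat -> B -> Prop}
  {eta : nat -> nat -> Zq q} (x : Peta n q U eta) : Tot B n q U :=
  proj1_sig (constructive_indefinite_description _ (proj2_sig x)).

Definition peta_proj {B : Type} {n q : nat} {U : nat -> B -> Prop}
  {eta : nat -> nat -> Zq q} (x : Peta n q U eta) : B :=
  fst (fst (proj1_sig (peta_rep x))).

Definition tot_shift {B : Type} {n q : nat} {U : nat -> B -> Prop}
  (t : Tot B n q U) (m : Zq q) : Tot B n q U :=
  exist _ (fst (proj1_sig t), zq_add (snd (proj1_sig t)) m) (proj2_sig t).

Definition peta_act {B : Type} {n q : nat} {U : nat -> B -> Prop}
  {eta : nat -> nat -> Zq q} (x : Peta n q U eta) (m : Zq q) : Peta n q U eta :=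
  peta_cls eta (tot_shift (peta_rep x) m).

Definition is_cocycle {B : Type} (n q : nat) (U : nat -> B -> Prop)
  (eta : nat -> nat -> Zq q) : Prop :=
  (forall j, (j < n)%nat -> (exists b, U j b) -> proj1_sig (eta j j) = 0%nat) /\
  (forall j k, (j < n)%nat -> (k < n)%nat -> (exists b, U j b /\ U k b) ->
     ((proj1_sig (eta k j) + proj1_sig (eta j k)) mod q = 0)%nat) /\
  (forall j k l, (j < n)%nat -> (k < n)%nat -> (l < n)%nat ->
     (exists b, U j b /\ U k b /\ U l b) ->
     ((proj1_sig (eta j k) + proj1_sig (eta k l)) mod q = proj1_sig (eta j l))%nat).

Definition chart_vec {B : Type} (n q : nat) (U : nat -> B -> Prop)
  (phi : nat -> B -> R) (eta : nat -> nat -> Zq q) (j : nat) (b : B) : Vec :=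
  fun k =>
    if Nat.ltb k n then
      if excluded_middle_informative (exists b', U j b' /\ U k b') then
        Cscale (sqrt (phi k b)) (zeta_pow q (proj1_sig (eta j k)))
      else C0
    else C0.

(* Main.v *)
Require Import Defs.
From Stdlib Require Import Reals.
Open Scope R_scope.
From Stdlib Require Import Lra Lia Arith Relations ClassicalEpsilon Classical
  FunctionalExtensionality PropExtensionality ProofIrrelevance.
Require Import Defs.

Lemma C_eq (a b : C) : fst a = fst b -> snd a = snd b -> a = b.
Proof. destruct a, b; simpl; intros; subst; reflexivity. Qed.

Lemma zeta_add q a b : zeta_pow q (a + b) = Cmul (zeta_pow q a) (zeta_pow q b).
Proof.
  unfold zeta_pow, Cmul; simpl.
  replace (2 * PI * INR (a + b) / INR q) with (2 * PI * INR a / INR q + 2 * PI * INR b / INR q)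
    by (rewrite plus_INR; unfold Rdiv; ring).
  rewrite cos_plus, sin_plus. apply C_eq; simpl; ring.
Qed.

Lemma zeta_mult q t : (0 < q)%nat -> zeta_pow q (q * t) = (1, 0).
Proof.
  intros Hq. unfold zeta_pow.
  assert (Hq' : INR q <> 0) by (apply not_0_INR; lia).
  replace (2 * PI * INR (q * t) / INR q) with (0 + 2 * INR t * PI)
    by (rewrite mult_INR; field; exact Hq').
  rewrite cos_period, sin_period, cos_0, sin_0. reflexivity.
Qed.

Lemma Cmul_1l c : Cmul (1, 0) c = c.
Proof. destruct c; unfold Cmul; apply C_eq; simpl; ring. Qed.

Lemma Cmul_assoc a b c : Cmul a (Cmul b c) = Cmul (Cmul a b) c.
Proof. destruct a, b, c; unfold Cmul; apply C_eq; simpl; ring. Qed.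

Lemma zeta_mod q a : (0 < q)%nat -> zeta_pow q (a mod q) = zeta_pow q a.
Proof.
  intros Hq. rewrite (Nat.div_mod_eq a q) at 2.
  rewrite zeta_add, zeta_mult by exact Hq. rewrite Cmul_1l. reflexivity.
Qed.

Lemma zeta_modeq q a b : (0 < q)%nat -> (a mod q = b mod q)%nat -> zeta_pow q a = zeta_pow q b.
Proof. intros Hq H. rewrite <- (zeta_mod q a), <- (zeta_mod q b), H by exact Hq. reflexivity. Qed.

Lemma zeta_0 q : zeta_pow q 0 = (1, 0).
Proof.
  unfold zeta_pow. replace (2 * PI * INR 0 / INR q) with 0 by (simpl; unfold Rdiv; ring).
  rewrite cos_0, sin_0; reflexivity.
Qed.

Lemma zeta_norm q g : Cnorm2 (zeta_pow q g) = 1.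
Proof.
  unfold Cnorm2, zeta_pow; simpl.
  pose proof (sin2_cos2 (2 * PI * INR g / INR q)) as H. unfold Rsqr in H. lra.
Qed.

Lemma Cnorm2_mul a b : Cnorm2 (Cmul a b) = Cnorm2 a * Cnorm2 b.
Proof. destruct a, b; unfold Cnorm2, Cmul; simpl; ring. Qed.

Lemma Cnorm2_nonneg a : 0 <= Cnorm2 a.
Proof. destruct a; unfold Cnorm2; simpl. nra. Qed.

Lemma Cnorm2_zero a : Cnorm2 a = 0 -> a = C0.
Proof. destruct a as [x y]; unfold Cnorm2; simpl; intros H.
  assert (x = 0) by nra. assert (y = 0) by nra. subst. reflexivity. Qed.

Lemma Cmul_cancel z1 z2 c : c <> C0 -> Cmul z1 c = Cmul z2 c -> z1 = z2.
Proof.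
  intros Hc H. destruct z1 as [a b], z2 as [a' b'], c as [x y].
  unfold Cmul in H; simpl in H. injection H as H1 H2.
  assert (Hn : x ^ 2 + y ^ 2 <> 0).
  { intro E. apply Hc. apply Cnorm2_zero. unfold Cnorm2; simpl. exact E. }
  assert (E1 : (a - a') * (x ^ 2 + y ^ 2) = 0).
  { replace ((a - a') * (x ^ 2 + y ^ 2)) with
      (x * ((a * x - b * y) - (a' * x - b' * y)) + y * ((a * y + b * x) - (a' * y + b' * x))) by ring.
    rewrite H1, H2. ring. }
  assert (E2 : (b - b') * (x ^ 2 + y ^ 2) = 0).
  { replace ((b - b') * (x ^ 2 + y ^ 2)) with
      (- y * ((a * x - b * y) - (a' * x - b' * y)) + x * ((a * y + b * x) - (a' * y + b' * x))) by ring.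
    rewrite H1, H2. ring. }
  apply Rmult_integral in E1; apply Rmult_integral in E2.
  destruct E1 as [E1|E1]; [|contradiction]; destruct E2 as [E2|E2]; [|contradiction].
  apply C_eq; simpl; lra.
Qed.

Lemma cos_eq_1_0 t : 0 <= t < 2 * PI -> cos t = 1 -> t = 0.
Proof.
  intros [H1 H2] H. destruct (Req_dec t 0) as [|Hne]; [assumption|].
  assert (Ht : 0 < t / 2 < PI) by lra.
  pose proof (sin_gt_0 (t/2) (proj1 Ht) (proj2 Ht)) as Hs.
  pose proof (cos_2a_sin (t/2)) as Hc. replace (2 * (t/2)) with t in Hc by field.
  exfalso. nra.
Qed.

Lemma zeta_inj q g g' : (g < q)%nat -> (g' < q)%nat -> zeta_pow q g = zeta_pow q g' -> g = g'.
Proof.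
  intros Hg Hg' H.
  assert (Hq : (0 < INR q)) by (apply lt_0_INR; lia).
  assert (Hcase : forall a b, (a <= b)%nat -> (b < q)%nat -> zeta_pow q a = zeta_pow q b -> a = b).
  { clear g g' Hg Hg' H. intros a b Hab Hb H.
    unfold zeta_pow in H. injection H as Hc Hs.
    set (x := 2 * PI * INR a / INR q) in *. set (y := 2 * PI * INR b / INR q) in *.
    assert (Hc1 : cos (y - x) = 1).
    { rewrite cos_minus, <- Hc, <- Hs. pose proof (sin2_cos2 x) as H. unfold Rsqr in H. lra. }
    assert (Hr : 0 <= y - x < 2 * PI).
    { unfold x, y. pose proof PI_RGT_0.
      assert (INR a <= INR b) by (apply le_INR; exact Hab).
      assert (INR b < INR q) by (apply lt_INR; exact Hb).
      assert (INR a >= 0) by (apply Rle_ge, pos_INR).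
      split.
      - unfold Rdiv. replace (2 * PI * INR b * / INR q - 2 * PI * INR a * / INR q)
          with (2 * PI * (INR b - INR a) * / INR q) by ring.
        apply Rmult_le_pos; [nra|]. left; apply Rinv_0_lt_compat; lra.
      - apply (Rmult_lt_reg_r (INR q)); [lra|].
        replace ((2 * PI * INR b / INR q - 2 * PI * INR a / INR q) * INR q)
          with (2 * PI * (INR b - INR a)) by (field; lra). nra. }
    pose proof (cos_eq_1_0 _ Hr Hc1).
    assert (INR a = INR b).
    { assert (E : 2 * PI * INR b / INR q = 2 * PI * INR a / INR q) by (unfold x, y in *; lra).
      pose proof PI_RGT_0.
      apply (Rmult_eq_reg_l (2 * PI / INR q)); [|apply Rgt_not_eq; apply Rdiv_lt_0_compat; lra].
      unfold Rdiv in *. lra. }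
    apply INR_eq; assumption. }
  destruct (Nat.le_ge_cases g g').
  - apply Hcase; assumption.
  - symmetry; apply Hcase; auto.
Qed.


Lemma rot_add q a b v : rot q a (rot q b v) = rot q (a + b) v.
Proof. apply functional_extensionality; intro k. unfold rot.
  rewrite Cmul_assoc, zeta_add. reflexivity. Qed.

Lemma rot_modeq q a b v : (0 < q)%nat -> (a mod q = b mod q)%nat -> rot q a v = rot q b v.
Proof. intros Hq H. unfold rot. rewrite (zeta_modeq q a b Hq H). reflexivity. Qed.

Lemma rot_0 q v : rot q 0 v = v.
Proof. apply functional_extensionality; intro k. unfold rot. rewrite zeta_0, Cmul_1l. reflexivity. Qed.

Lemma rsum_nonneg n f : (forall k, (k < n)%nat -> 0 <= f k) -> 0 <= rsum n f.
Proof. induction n; simpl; intros H; [lra|].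
  pose proof (IHn (fun k Hk => H k ltac:(lia))). pose proof (H n ltac:(lia)). lra. Qed.

Lemma rsum_le n f g : (forall k, (k < n)%nat -> f k <= g k) -> rsum n f <= rsum n g.
Proof. induction n; simpl; intros H; [lra|].
  pose proof (IHn (fun k Hk => H k ltac:(lia))). pose proof (H n ltac:(lia)). lra. Qed.

Lemma rsum_plus n f g : rsum n (fun k => f k + g k) = rsum n f + rsum n g.
Proof. induction n; simpl; [ring|]. rewrite IHn. ring. Qed.

Lemma rsum_scal n c f : rsum n (fun k => c * f k) = c * rsum n f.
Proof. induction n; simpl; [ring|]. rewrite IHn. ring. Qed.

Lemma rsum_bound n f d : (forall k, (k < n)%nat -> f k <= d) -> rsum n f <= INR n * d.
Proof. induction n; cbn [rsum]; intros H; [simpl; lra|].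
  pose proof (IHn (fun k Hk => H k ltac:(lia))). pose proof (H n ltac:(lia)).
  rewrite S_INR. lra. Qed.

Lemma rsum_extend N M f : (N <= M)%nat -> (forall k, (N <= k)%nat -> f k = 0) ->
  rsum M f = rsum N f.
Proof. intros HNM H. induction HNM; [reflexivity|]. simpl. rewrite IHHNM, H by lia. ring. Qed.

Lemma rsum_exists_nz n f : rsum n f <> 0 -> exists k, (k < n)%nat /\ f k <> 0.
Proof. induction n; simpl; intros H; [lra|].
  destruct (Req_dec (f n) 0) as [E|E].
  - rewrite E in H. destruct IHn as [k [Hk Hf]]; [lra|]. exists k; split; [lia|auto].
  - exists n; split; [lia|auto]. Qed.

Definition Dn (N : nat) (v w : Vec) : R := rsum N (fun k => Cnorm2 (Vsub v w k)).

Lemma Dn_nonneg N v w : 0 <= Dn N v w.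
Proof. apply rsum_nonneg; intros; apply Cnorm2_nonneg. Qed.

Lemma Dn_sym N v w : Dn N v w = Dn N w v.
Proof. unfold Dn. apply rsum_ext; intros k _. unfold Cnorm2, Vsub; simpl. ring. Qed.

Lemma Dn_rot N q g v w : Dn N (rot q g v) (rot q g w) = Dn N v w.
Proof. unfold Dn. apply rsum_ext; intros k _. unfold rot.
  replace (Vsub (fun k0 => Cmul (zeta_pow q g) (v k0)) (fun k0 => Cmul (zeta_pow q g) (w k0)) k)
    with (Cmul (zeta_pow q g) (Vsub v w k)).
  - rewrite Cnorm2_mul, zeta_norm. ring.
  - unfold Vsub, Cmul; apply C_eq; simpl; ring.
Qed.

Definition Csub (a b : C) : C := (fst a - fst b, snd a - snd b).

Lemma Dn_rot_diff N q g g' v :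
  Dn N (rot q g v) (rot q g' v) = Cnorm2 (Csub (zeta_pow q g) (zeta_pow q g')) * rsum N (fun k => Cnorm2 (v k)).
Proof. unfold Dn. rewrite <- rsum_scal. apply rsum_ext; intros k _. unfold rot.
  replace (Vsub (fun k0 => Cmul (zeta_pow q g) (v k0)) (fun k0 => Cmul (zeta_pow q g') (v k0)) k)
    with (Cmul (Csub (zeta_pow q g) (zeta_pow q g')) (v k)).
  - rewrite Cnorm2_mul. ring.
  - unfold Vsub, Cmul, Csub; apply C_eq; simpl; ring.
Qed.

Lemma sq_tri s u w : 0 < s -> (u + w) ^ 2 <= (1 + s) * w ^ 2 + (1 + / s) * u ^ 2.
Proof. intros Hs.
  assert (E : (1 + s) * w ^ 2 + (1 + / s) * u ^ 2 - (u + w) ^ 2 = (s * w - u) ^ 2 / s) by (field; lra).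
  assert (0 <= (s * w - u) ^ 2 / s).
  { apply Rmult_le_pos; [apply pow2_ge_0|]. left; apply Rinv_0_lt_compat; lra. }
  lra. Qed.

Lemma Dn_tri N s a b c : 0 < s -> Dn N a c <= (1 + s) * Dn N b c + (1 + / s) * Dn N a b.
Proof. intros Hs. unfold Dn. rewrite <- !rsum_scal, <- rsum_plus. apply rsum_le; intros k _.
  unfold Cnorm2, Vsub; simpl.
  pose proof (sq_tri s (fst (a k) - fst (b k)) (fst (b k) - fst (c k)) Hs).
  pose proof (sq_tri s (snd (a k) - snd (b k)) (snd (b k) - snd (c k)) Hs).
  replace (fst (a k) - fst (c k)) with ((fst (a k) - fst (b k)) + (fst (b k) - fst (c k))) by ring.
  replace (snd (a k) - snd (c k)) with ((snd (a k) - snd (b k)) + (snd (b k) - snd (c k))) by ring.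
  lra. Qed.

Lemma Dn_tri2 N a b c : Dn N a c <= 2 * Dn N b c + 2 * Dn N a b.
Proof. pose proof (Dn_tri N 1 a b c ltac:(lra)). replace (/1) with 1 in H by field. lra. Qed.

Lemma sqrt_lt_sq x e : 0 <= x -> 0 < e -> x < e * e -> sqrt x < e.
Proof. intros Hx He H. rewrite <- (sqrt_square e) by lra. apply sqrt_lt_1_alt. lra. Qed.

Lemma ball_num D0 R : 0 <= D0 < R -> exists e, 0 < e /\
  forall x y, 0 <= x -> sqrt x < e ->
    (forall s, 0 < s -> y <= (1 + s) * D0 + (1 + / s) * x) -> y < R.
Proof.
  intros [H0 H1]. set (s := (R - D0) / (2 * R)).
  assert (Hs : 0 < s) by (unfold s; apply Rdiv_lt_0_compat; lra).
  assert (Hs' : 0 < 1 + / s) by (pose proof (Rinv_0_lt_compat s Hs); lra).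
  set (c := (R - D0) / (2 * (1 + / s))).
  assert (Hc : 0 < c) by (unfold c; apply Rdiv_lt_0_compat; lra).
  exists (sqrt c). split; [apply sqrt_lt_R0; exact Hc|].
  intros x y Hx Hxe Hy. specialize (Hy s Hs).
  apply sqrt_lt_0_alt in Hxe.
  assert (E1 : (1 + / s) * x < (R - D0) / 2).
  { unfold c in Hxe. apply (Rmult_lt_compat_l (1 + / s)) in Hxe; [|exact Hs'].
    replace ((1 + / s) * ((R - D0) / (2 * (1 + / s)))) with ((R - D0) / 2) in Hxe by (field; lra). exact Hxe. }
  assert (E2 : s * D0 <= (R - D0) / 2).
  { unfold s. replace ((R - D0) / (2 * R) * D0) with (((R - D0) / 2) * (D0 / R)) by (field; lra).
    assert (D0 / R <= 1). { apply (Rmult_le_reg_r R); [lra|]. replace (D0 / R * R) with D0 by (field; lra). lra. }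
    assert (0 <= (R - D0) / 2) by lra. nra. }
  lra.
Qed.

Lemma ball_open n x0 R : sphere_top n (fun w => Dn n (proj1_sig w) x0 < R).
Proof.
  intros z Hz. destruct (ball_num (Dn n (proj1_sig z) x0) R) as [e [He Hb]].
  { split; [apply Dn_nonneg|exact Hz]. }
  exists e; split; [exact He|]. intros w Hw.
  apply (Hb (Dn n (proj1_sig w) (proj1_sig z))); [apply Dn_nonneg| exact Hw|].
  intros s Hs. apply Dn_tri. exact Hs.
Qed.


Lemma sig_eq {A : Type} {P : A -> Prop} (x y : {a | P a}) :
  proj1_sig x = proj1_sig y -> x = y.
Proof. destruct x, y; simpl; intros; subst; f_equal; apply proof_irrelevance. Qed.

Lemma open_local {X : Type} (T : topology X) (S : X -> Prop) :
  is_topology T -> (forall x, S x -> exists O, T O /\ O x /\ forall y, O y -> S y) -> T S.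
Proof.
  intros [_ [_ HU]] H.
  assert (E : S = (fun x => exists O, (T O /\ forall y, O y -> S y) /\ O x)).
  { apply functional_extensionality; intro x. apply propositional_extensionality; split.
    - intros Hx. destruct (H x Hx) as [O [HO [Ox HS]]]. exists O; auto.
    - intros [O [[_ HS] Ox]]. auto. }
  rewrite E. apply HU. intros O [HO _]; exact HO.
Qed.

Lemma open_inter {X : Type} (T : topology X) O1 O2 :
  is_topology T -> T O1 -> T O2 -> T (fun x => O1 x /\ O2 x).
Proof. intros [_ [HI _]]. apply HI. Qed.

Lemma Rball_open x0 d : R_top (fun y => Rabs (y - x0) < d).
Proof. intros x Hx. exists (d - Rabs (x - x0)); split; [lra|].
  intros y Hy. pose proof (Rabs_triang (y - x) (x - x0)).
  replace (y - x + (x - x0)) with (y - x0) in H by ring. lra. Qed.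

Lemma phi_nbhd {B : Type} (TB : topology B) (n : nat) (phi : nat -> B -> R) :
  is_topology TB -> (forall j, (j < n)%nat -> continuous TB R_top (phi j)) ->
  forall b0 d, 0 < d -> exists N, TB N /\ N b0 /\
    forall b, N b -> forall k, (k < n)%nat -> Rabs (phi k b - phi k b0) < d.
Proof.
  intros HT Hc b0 d Hd.
  assert (G : forall m, (m <= n)%nat -> exists N, TB N /\ N b0 /\
    forall b, N b -> forall k, (k < m)%nat -> Rabs (phi k b - phi k b0) < d).
  { induction m; intros Hm.
    - exists (fun _ => True). split; [apply HT|]. split; [exact I|]. intros; lia.
    - destruct IHm as [N [HN [Nb HNk]]]; [lia|].
      exists (fun b => N b /\ Rabs (phi m b - phi m b0) < d). split.
      + apply open_inter; [exact HT|exact HN|]. apply (Hc m ltac:(lia) _ (Rball_open (phi m b0) d)).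
      + split; [split; [exact Nb|]; rewrite Rminus_diag, Rabs_R0; exact Hd|].
        intros b [Nb' Hm'] k Hk. destruct (Nat.eq_dec k m) as [->|Hne]; [exact Hm'|].
        apply HNk; [exact Nb'|lia]. }
  apply G; lia.
Qed.


Lemma Cnorm2_Cscale r c : Cnorm2 (Cscale r c) = r ^ 2 * Cnorm2 c.
Proof. unfold Cnorm2, Cscale; simpl; ring. Qed.

Lemma chart_ge {B : Type} n q (U : nat -> B -> Prop) phi eta j b k : (n <= k)%nat -> chart_vec n q U phi eta j b k = C0.
Proof. intros H. unfold chart_vec. replace (Nat.ltb k n) with false; [reflexivity|].
  symmetry; apply Nat.ltb_ge; exact H. Qed.

Lemma chart_in {B : Type} n q (U : nat -> B -> Prop) phi eta j b k : (k < n)%nat -> U j b -> U k b ->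
  chart_vec n q U phi eta j b k = Cscale (sqrt (phi k b)) (zeta_pow q (proj1_sig (eta j k))).
Proof. intros Hk Hj Hkb. unfold chart_vec. replace (Nat.ltb k n) with true by (symmetry; apply Nat.ltb_lt; exact Hk).
  destruct (excluded_middle_informative _) as [_|Hn]; [reflexivity|].
  exfalso; apply Hn; exists b; auto. Qed.

Lemma chart_out {B : Type} n q (U : nat -> B -> Prop) phi eta j b k : phi k b = 0 ->
  chart_vec n q U phi eta j b k = C0.
Proof. intros H. unfold chart_vec. destruct (Nat.ltb k n); [|reflexivity].
  destruct (excluded_middle_informative _); [|reflexivity].
  rewrite H, sqrt_0. unfold Cscale, C0; apply C_eq; simpl; ring. Qed.

Lemma chart_on_sphere {B : Type} n q (U : nat -> B -> Prop) phi eta j b :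
  (forall k b, (k < n)%nat -> 0 <= phi k b) ->
  (forall b, rsum n (fun j => phi j b) = 1) ->
  (forall k b, (k < n)%nat -> ~ U k b -> phi k b = 0) ->
  U j b -> on_sphere n (chart_vec n q U phi eta j b).
Proof.
  intros Hpos Hsum Hout Hj. split.
  - intros k Hk. apply chart_ge; exact Hk.
  - rewrite <- (Hsum b). apply rsum_ext. intros k Hk.
    destruct (classic (U k b)) as [Hu|Hu].
    + rewrite (chart_in n q U phi eta j b k Hk Hj Hu), Cnorm2_Cscale, zeta_norm.
      rewrite <- Rsqr_pow2, Rsqr_sqrt by (apply Hpos; exact Hk). ring.
    + rewrite (Hout k b Hk Hu). rewrite chart_out by (apply Hout; auto).
      unfold Cnorm2, C0; simpl; ring.
Qed.

Lemma chart_change {B : Type} n q (U : nat -> B -> Prop) phi eta j l b :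
  (0 < q)%nat -> is_cocycle n q U eta ->
  (forall k b, (k < n)%nat -> ~ U k b -> phi k b = 0) ->
  (j < n)%nat -> (l < n)%nat -> U j b -> U l b ->
  chart_vec n q U phi eta l b = rot q (proj1_sig (eta l j)) (chart_vec n q U phi eta j b).
Proof.
  intros Hq [_ [_ Hc3]] Hout Hj Hl Ujb Ulb. apply functional_extensionality; intro k. unfold rot.
  destruct (Nat.lt_ge_cases k n) as [Hk|Hk].
  - destruct (classic (U k b)) as [Hu|Hu].
    + rewrite !chart_in by assumption.
      rewrite <- (Hc3 l j k Hl Hj Hk) by (exists b; auto).
      rewrite zeta_mod, zeta_add by exact Hq.
      unfold Cmul, Cscale; apply C_eq; simpl; ring.
    + rewrite !chart_out by (apply Hout; auto). unfold Cmul, C0; apply C_eq; simpl; ring.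
  - rewrite !chart_ge by exact Hk. unfold Cmul, C0; apply C_eq; simpl; ring.
Qed.

Lemma sqrt_diff_sq a b : 0 <= a -> 0 <= b -> (sqrt a - sqrt b) ^ 2 <= Rabs (a - b).
Proof.
  intros Ha Hb. pose proof (sqrt_positivity a Ha). pose proof (sqrt_positivity b Hb).
  rewrite <- (sqrt_sqrt a Ha) at 2. rewrite <- (sqrt_sqrt b Hb) at 2.
  set (x := sqrt a) in *. set (y := sqrt b) in *.
  destruct (Rle_dec y x).
  - rewrite Rabs_right by nra. nra.
  - rewrite Rabs_left1 by nra. nra.
Qed.

Lemma chart_int {B : Type} n q (U : nat -> B -> Prop) phi eta j b k : (k < n)%nat ->
  (exists b', U j b' /\ U k b') ->
  chart_vec n q U phi eta j b k = Cscale (sqrt (phi k b)) (zeta_pow q (proj1_sig (eta j k))).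
Proof. intros Hk Hj. unfold chart_vec. replace (Nat.ltb k n) with true by (symmetry; apply Nat.ltb_lt; exact Hk).
  destruct (excluded_middle_informative _) as [_|Hn]; [reflexivity|contradiction]. Qed.

Lemma chart_noint {B : Type} n q (U : nat -> B -> Prop) phi eta j b k :
  ~ (exists b', U j b' /\ U k b') -> chart_vec n q U phi eta j b k = C0.
Proof. intros Hj. unfold chart_vec. destruct (Nat.ltb k n); [|reflexivity].
  destruct (excluded_middle_informative _) as [Hn|_]; [contradiction|reflexivity]. Qed.

Lemma chart_cont {B : Type} (TB : topology B) n q (U : nat -> B -> Prop) phi eta j :
  is_topology TB -> (forall j, (j < n)%nat -> continuous TB R_top (phi j)) ->
  (forall k b, (k < n)%nat -> 0 <= phi k b) ->
  forall b0 e, 0 < e -> exists N, TB N /\ N b0 /\ forall b, N b ->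
    Dn n (chart_vec n q U phi eta j b) (chart_vec n q U phi eta j b0) < e.
Proof.
  intros HT Hc Hpos b0 e He.
  assert (Hn : 0 < INR n + 1) by (pose proof (pos_INR n); lra).
  destruct (phi_nbhd TB n phi HT Hc b0 (e / (INR n + 1))) as [N [HN [Nb HNk]]].
  { apply Rdiv_lt_0_compat; lra. }
  exists N; split; [exact HN|]; split; [exact Nb|]. intros b Nbb.
  apply Rle_lt_trans with (INR n * (e / (INR n + 1))).
  - unfold Dn. apply rsum_bound. intros k Hk.
    specialize (HNk b Nbb k Hk).
    destruct (classic (exists b', U j b' /\ U k b')) as [Hi|Hi].
    + unfold Vsub. rewrite !(chart_int n q U phi eta j _ k Hk Hi).
      unfold Vsub, Cscale, Cnorm2; cbn [fst snd].
      pose proof (zeta_norm q (proj1_sig (eta j k))) as Z. unfold Cnorm2 in Z.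
      pose proof (sqrt_diff_sq (phi k b) (phi k b0) (Hpos k b Hk) (Hpos k b0 Hk)).
      set (s := sqrt (phi k b)) in *. set (s0 := sqrt (phi k b0)) in *.
      set (zc := fst (zeta_pow q (proj1_sig (eta j k)))) in *.
      set (zs := snd (zeta_pow q (proj1_sig (eta j k)))) in *.
      replace ((s * zc - s0 * zc) ^ 2 + (s * zs - s0 * zs) ^ 2) with ((s - s0) ^ 2 * (zc ^ 2 + zs ^ 2)) by ring.
      rewrite Z. lra.
    + unfold Vsub. rewrite !(chart_noint n q U phi eta j _ k Hi).
      unfold Vsub, C0, Cnorm2; simpl. pose proof (Rabs_pos (phi k b - phi k b0)). lra.
  - apply (Rmult_lt_reg_r (INR n + 1)); [lra|].
    replace (INR n * (e / (INR n + 1)) * (INR n + 1)) with (INR n * e) by (field; lra). nra.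
Qed.


Lemma zq_eq {q} (g h : Zq q) : proj1_sig g = proj1_sig h -> g = h.
Proof. apply sig_eq. Qed.

Definition zq_zero (q : nat) (Hq : (0 < q)%nat) : Zq q := exist _ 0%nat Hq.

Lemma zq_sub_lt q (g h : Zq q) : (0 < q)%nat -> ((proj1_sig h + (q - proj1_sig g)) mod q < q)%nat.
Proof. intros. apply Nat.mod_upper_bound. lia. Qed.

Lemma zq_solve q (Hq : (0 < q)%nat) (g h : Zq q) : exists m, zq_add g m = h.
Proof.
  exists (exist (fun x => (x < q)%nat) _ (zq_sub_lt q g h Hq)). apply zq_eq. simpl.
  destruct g as [g Hg], h as [h Hh]; simpl.
  rewrite Nat.Div0.add_mod_idemp_r.
  replace (g + (h + (q - g)))%nat with (h + 1 * q)%nat by lia.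
  rewrite Nat.Div0.mod_add. apply Nat.mod_small; exact Hh.
Qed.

Lemma zq_add_assoc q (Hq : (0 < q)%nat) (a b c : Zq q) : zq_add (zq_add a b) c = zq_add a (zq_add b c).
Proof. apply zq_eq. destruct a as [a Ha], b as [b Hb], c as [c Hc]; simpl.
  rewrite Nat.Div0.add_mod_idemp_l, Nat.Div0.add_mod_idemp_r. f_equal; lia. Qed.

Lemma zq_add_0 q (Hq : (0 < q)%nat) (a : Zq q) : zq_add a (zq_zero q Hq) = a.
Proof. apply zq_eq. destruct a as [a Ha]; simpl. rewrite Nat.add_0_r. apply Nat.mod_small; exact Ha. Qed.


Lemma orbit_self {E : Type} {q} (act : E -> Zq q -> E) (Hq : (0 < q)%nat)
  (H0 : forall z, act z (zq_zero q Hq) = z) z : orbit act z z.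
Proof. exists (zq_zero q Hq). symmetry; apply H0. Qed.

Lemma orbit_act {E : Type} {q} (act : E -> Zq q -> E) (Hq : (0 < q)%nat)
  (Hact : forall z g m, act (act z g) m = act z (zq_add g m)) z g :
  orbit act (act z g) = orbit act z.
Proof.
  apply functional_extensionality; intro x. apply propositional_extensionality. split.
  - intros [h ->]. rewrite Hact. eexists; reflexivity.
  - intros [h ->]. destruct (zq_solve q Hq g h) as [m Hm]. exists m. rewrite Hact, Hm. reflexivity.
Qed.

Lemma orb_map_eq {E : Type} {q} (act : E -> Zq q -> E) (Hq : (0 < q)%nat)
  (Hact : forall z g m, act (act z g) m = act z (zq_add g m))
  (H0 : forall z, act z (zq_zero q Hq) = z) z w :
  orb_map act z = orb_map act w <-> exists g, z = act w g.
Proof.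
  split.
  - intros Ee. apply (f_equal (@proj1_sig _ _)) in Ee. simpl in Ee.
    pose proof (orbit_self act Hq H0 z) as Hz. rewrite Ee in Hz. destruct Hz as [g Hg]. exists g; exact Hg.
  - intros [g ->]. apply sig_eq. simpl. apply orbit_act; assumption.
Qed.

Lemma orb_rep_spec {E : Type} {q} (act : E -> Zq q -> E) (x : OrbSpace act) :
  orb_map act (orb_rep x) = x.
Proof.
  apply sig_eq. unfold orb_rep. destruct (constructive_indefinite_description _ _) as [z Hz]. simpl.
  symmetry; exact Hz.
Qed.

Lemma sph_act_comp n q (Hq : (0 < q)%nat) (z : Sphere n) (g m : Zq q) :
  sph_act (sph_act z g) m = sph_act z (zq_add g m).
Proof. apply sig_eq; simpl. rewrite rot_add. apply rot_modeq; [exact Hq|].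
  rewrite Nat.Div0.mod_mod. f_equal; lia. Qed.

Lemma sph_act_zero n q (Hq : (0 < q)%nat) (z : Sphere n) : sph_act z (zq_zero q Hq) = z.
Proof. apply sig_eq; simpl. apply rot_0. Qed.

Lemma sphinf_act_comp q (Hq : (0 < q)%nat) (z : SphereInf) (g m : Zq q) :
  sphinf_act (sphinf_act z g) m = sphinf_act z (zq_add g m).
Proof. apply sig_eq; simpl. rewrite rot_add. apply rot_modeq; [exact Hq|].
  rewrite Nat.Div0.mod_mod. f_equal; lia. Qed.

Lemma sphinf_act_zero q (Hq : (0 < q)%nat) (z : SphereInf) : sphinf_act z (zq_zero q Hq) = z.
Proof. apply sig_eq; simpl. apply rot_0. Qed.

Lemma incl_act n q (z : Sphere n) (g : Zq q) : sph_incl (sph_act z g) = sphinf_act (sph_incl z) g.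
Proof. apply sig_eq; reflexivity. Qed.

Lemma rot_inj n q v g g' : on_sphere n v -> (g < q)%nat -> (g' < q)%nat ->
  rot q g v = rot q g' v -> g = g'.
Proof.
  intros [_ Hs] Hg Hg' E.
  destruct (rsum_exists_nz n (fun k => Cnorm2 (v k))) as [k [_ Hk]]; [lra|].
  apply (zeta_inj q); try assumption.
  apply (Cmul_cancel _ _ (v k)).
  - intro Z. apply Hk. rewrite Z. unfold Cnorm2, C0; simpl; ring.
  - apply (f_equal (fun w => w k)) in E. exact E.
Qed.

Lemma finite_min (N : nat) (F : nat -> nat -> R) :
  (forall a b, (a < N)%nat -> (b < N)%nat -> a <> b -> 0 < F a b) ->
  exists c, 0 < c /\ forall a b, (a < N)%nat -> (b < N)%nat -> a <> b -> c <= F a b.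
Proof.
  intros H.
  assert (G : forall m, exists c, 0 < c /\ forall a b, (a < N)%nat -> (b < N)%nat -> a <> b -> (a < m)%nat -> c <= F a b).
  { induction m.
    - exists 1; split; [lra|]. intros; lia.
    - destruct IHm as [c [Hc Hm]].
      assert (G2 : forall m', exists d, 0 < d /\ forall b, (b < N)%nat -> m <> b -> (m < N)%nat -> (b < m')%nat -> d <= F m b).
      { induction m'.
        - exists 1; split; [lra|]. intros; lia.
        - destruct IHm' as [d [Hd Hm']].
          destruct (classic ((m' < N)%nat /\ m <> m' /\ (m < N)%nat)) as [[H1 [H2 H3]]|Hno].
          + exists (Rmin d (F m m')). split.
            * apply Rmin_pos; [exact Hd| apply H; auto].
            * intros b Hb Hmb HmN Hbm. destruct (Nat.eq_dec b m') as [->|Hne].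
              -- apply Rmin_r.
              -- eapply Rle_trans; [apply Rmin_l| apply Hm'; auto; lia].
          + exists d; split; [exact Hd|]. intros b Hb Hmb HmN Hbm.
            destruct (Nat.eq_dec b m') as [->|Hne]; [exfalso; apply Hno; auto|]. apply Hm'; auto; lia. }
      destruct (G2 N) as [d [Hd Hd']].
      exists (Rmin c d). split; [apply Rmin_pos; auto|].
      intros a b Ha Hb Hab Ham. destruct (Nat.eq_dec a m) as [->|Hne].
      + eapply Rle_trans; [apply Rmin_r| apply Hd'; auto].
      + eapply Rle_trans; [apply Rmin_l| apply Hm; auto; lia]. }
  destruct (G N) as [c [Hc Hc']]. exists c; split; [exact Hc|]. intros; apply Hc'; auto.
Qed.

Lemma zeta_sep q : exists c, 0 < c /\ forall a b, (a < q)%nat -> (b < q)%nat -> a <> b ->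
  c <= Cnorm2 (Csub (zeta_pow q a) (zeta_pow q b)).
Proof.
  apply finite_min. intros a b Ha Hb Hab.
  destruct (Rle_lt_or_eq_dec 0 _ (Cnorm2_nonneg (Csub (zeta_pow q a) (zeta_pow q b)))) as [Hp|Hz]; [exact Hp|].
  exfalso. apply Hab. apply (zeta_inj q); auto.
  symmetry in Hz. apply Cnorm2_zero in Hz. unfold Csub, C0 in Hz.
  destruct (zeta_pow q a) as [x1 y1], (zeta_pow q b) as [x2 y2]. simpl in Hz.
  injection Hz as H1 H2. apply C_eq; simpl; lra.
Qed.

Lemma rot_sep n q : exists c, 0 < c /\ forall v a b, on_sphere n v -> (a < q)%nat -> (b < q)%nat -> a <> b ->
  c <= Dn n (rot q a v) (rot q b v).
Proof.
  destruct (zeta_sep q) as [c [Hc H]]. exists c; split; [exact Hc|].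
  intros v a b [_ Hs] Ha Hb Hab. rewrite Dn_rot_diff, Hs, Rmult_1_r. apply H; auto.
Qed.


Definition tot_b {B : Type} {n q : nat} {U : nat -> B -> Prop} (t : Tot B n q U) : B := fst (fst (proj1_sig t)).
Definition tot_j {B : Type} {n q : nat} {U : nat -> B -> Prop} (t : Tot B n q U) : nat := snd (fst (proj1_sig t)).
Definition tot_g {B : Type} {n q : nat} {U : nat -> B -> Prop} (t : Tot B n q U) : Zq q := snd (proj1_sig t).

Lemma cls_eq {B : Type} {n q : nat} {U : nat -> B -> Prop} (eta : nat -> nat -> Zq q) (t t' : Tot B n q U) :
  glue_eq eta t t' -> peta_cls eta t = peta_cls eta t'.
Proof.
  intros H. apply sig_eq; simpl. apply functional_extensionality; intro x.
  apply propositional_extensionality; split; intros Hx.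
  - apply rst_trans with t; [apply rst_sym; exact H| exact Hx].
  - apply rst_trans with t'; [exact H| exact Hx].
Qed.

Lemma rep_cls {B : Type} {n q : nat} {U : nat -> B -> Prop} (eta : nat -> nat -> Zq q) (x : Peta n q U eta) :
  peta_cls eta (peta_rep x) = x.
Proof.
  apply sig_eq. unfold peta_rep. destruct (constructive_indefinite_description _ _) as [t Ht]. simpl.
  symmetry; exact Ht.
Qed.

Lemma cls_rep {B : Type} {n q : nat} {U : nat -> B -> Prop} (eta : nat -> nat -> Zq q) (t : Tot B n q U) :
  glue_eq eta t (peta_rep (peta_cls eta t)).
Proof.
  pose proof (rep_cls eta (peta_cls eta t)) as E.
  apply (f_equal (@proj1_sig _ _)) in E. simpl in E. rewrite <- E. apply rst_refl.
Qed.

Lemma generic_iso {B E L : Type} (TB : topology B) (n q : nat) (U : nat -> B -> Prop)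
  (eta : nat -> nat -> Zq q) (TE : topology E) (act : E -> Zq q -> E) (p : E -> L) (f : B -> L)
  (c : nat -> B -> E) :
  is_topology TB -> (0 < q)%nat ->
  (forall j, (j < n)%nat -> TB (U j)) ->
  (forall b, exists j, (j < n)%nat /\ U j b) ->
  (forall z g m, act (act z g) m = act z (zq_add g m)) ->
  (forall j b g, (j < n)%nat -> U j b -> p (act (c j b) g) = f b) ->
  (forall j k b g, (j < n)%nat -> (k < n)%nat -> U j b -> U k b ->
      act (c j b) g = act (c k b) (zq_add g (eta j k))) ->
  (forall j b g g', (j < n)%nat -> U j b -> act (c j b) g = act (c j b) g' -> g = g') ->
  (forall j b z, (j < n)%nat -> U j b -> p z = f b -> exists g, z = act (c j b) g) ->
  (forall j g b0 O2, (j < n)%nat -> U j b0 -> TE O2 -> O2 (act (c j b0) g) ->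
      exists N, TB N /\ N b0 /\ forall b, N b -> U j b -> O2 (act (c j b) g)) ->
  (forall j g b0, (j < n)%nat -> U j b0 -> exists N O2, TB N /\ TE O2 /\ N b0 /\
      O2 (act (c j b0) g) /\ forall b z, N b -> U j b -> O2 z -> p z = f b -> z = act (c j b) g) ->
  iso_to_pullback TB (peta_top TB n q U eta) peta_proj peta_act TE act p f.
Proof.
  intros HT Hq HU Hcov Hact Hpf Hglue Hinj Hsurj Hcont Htube.
  set (hv := fun t : Tot B n q U => act (c (tot_j t) (tot_b t)) (tot_g t)).
  assert (Htot : forall t : Tot B n q U, (tot_j t < n)%nat /\ U (tot_j t) (tot_b t)).
  { intros t. exact (proj2_sig t). }
  assert (Hgl : forall t t', glue_eq eta t t' -> tot_b t = tot_b t' /\ hv t = hv t').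
  { intros t t' H. induction H as [t t' Hr| t | t t' _ [IH1 IH2] | t t' t'' _ [IH1 IH2] _ [IH3 IH4]].
    - destruct t as [[[b j] g] [Hj Hb]], t' as [[[b' j'] g'] [Hj' Hb']].
      destruct Hr as [Hbb Hgg]. simpl in Hbb, Hgg. subst b'. split; [reflexivity|].
      unfold hv, tot_j, tot_b, tot_g; simpl.
      rewrite (Hglue j j' b g Hj Hj' Hb Hb'). f_equal. apply zq_eq. simpl. symmetry; exact Hgg.
    - split; reflexivity.
    - split; symmetry; assumption.
    - split; etransitivity; eauto. }
  assert (Hcls : forall t t', tot_b t = tot_b t' -> hv t = hv t' -> peta_cls eta t = peta_cls eta t').
  { intros t t' Hb Hh. apply cls_eq.
    destruct t as [[[b j] g] [Hj Hbj]], t' as [[[b' j'] g'] [Hj' Hbj']].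
    unfold tot_b in Hb; simpl in Hb. subst b'.
    set (t3 := exist (fun t : B * nat * Zq q => (snd (fst t) < n)%nat /\ U (snd (fst t)) (fst (fst t)))
                 ((b, j'), zq_add g (eta j j')) (conj Hj' Hbj')).
    assert (E3 : t3 = exist _ ((b, j'), g') (conj Hj' Hbj')).
    { apply sig_eq; simpl. f_equal. apply (Hinj j' b); [exact Hj'|exact Hbj'|].
      unfold hv, tot_j, tot_b, tot_g in Hh; simpl in Hh.
      rewrite <- (Hglue j j' b g Hj Hj' Hbj Hbj'). exact Hh. }
    rewrite <- E3. apply rst_step. split; reflexivity. }
  assert (Hrc : forall t, tot_b (peta_rep (peta_cls eta t)) = tot_b t /\ hv (peta_rep (peta_cls eta t)) = hv t).
  { intros t. destruct (Hgl _ _ (cls_rep eta t)); split; symmetry; assumption. }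
  assert (Hpp : forall t, f (tot_b t) = p (hv t)).
  { intros t. symmetry. apply Hpf; apply Htot. }
  set (Ppt := fun t : Tot B n q U => exist (fun x : B * E => f (fst x) = p (snd x)) (tot_b t, hv t) (Hpp t)).
  assert (Hk : forall y : Pullback f p, {t : Tot B n q U | tot_b t = fst (proj1_sig y) /\ hv t = snd (proj1_sig y)}).
  { intros y. apply constructive_indefinite_description.
    destruct y as [[b z] Hy]; simpl in *.
    destruct (Hcov b) as [j [Hj Hb]].
    destruct (Hsurj j b z Hj Hb (eq_sym Hy)) as [g Hg].
    exists (exist _ ((b, j), g) (conj Hj Hb)). split; [reflexivity|]. symmetry; exact Hg. }
  exists (fun x => Ppt (peta_rep x)), (fun y => peta_cls eta (proj1_sig (Hk y))).
  split; [|split; [|split; [|split; [|split]]]].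
  -
    intros x. destruct (Hk (Ppt (peta_rep x))) as [t [Hb Hh]]; simpl in *.
    rewrite <- (rep_cls eta x). apply Hcls; assumption.
  -
    intros y. destruct (Hk y) as [t [Hb Hh]]; simpl.
    apply sig_eq; simpl. destruct (Hrc t) as [E1 E2]. rewrite E1, E2, Hb, Hh.
    destruct (proj1_sig y); reflexivity.
  -
    intros V [W [HW HV]]. unfold peta_top, quotient_top, tot_top. intros j g Hj.
    exists (fun b => U j b /\ W (b, act (c j b) g)). split.
    + apply open_local; [exact HT|]. intros b0 [Hb0 HW0].
      destruct (HW _ HW0) as [O1 [O2 [HO1 [HO2 [O1b [O2z Hbox]]]]]]. simpl in O1b, O2z.
      destruct (Hcont j g b0 O2 Hj Hb0 HO2 O2z) as [N [HN [Nb HNb]]].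
      exists (fun b => (O1 b /\ N b) /\ U j b). split.
      * apply open_inter; [exact HT| apply open_inter; auto | apply HU; exact Hj].
      * split; [auto|]. intros b [[O1b' Nb'] Ub']. split; [exact Ub'|].
        apply (Hbox (b, act (c j b) g)); simpl; auto.
    + intros b Hb. rewrite HV. simpl. destruct (Hrc (exist _ (b, j, g) (conj Hj Hb))) as [E1 E2].
      rewrite E1, E2. unfold hv, tot_b, tot_j, tot_g; simpl. split; [intros H; split; auto| intros [_ H]; exact H].
  -
    intros W HW. unfold pullback_top, subspace_top.
    exists (fun x => exists O1 O2, TB O1 /\ TE O2 /\ O1 (fst x) /\ O2 (snd x) /\
      forall y : Pullback f p, O1 (fst (proj1_sig y)) -> O2 (snd (proj1_sig y)) ->
        W (peta_cls eta (proj1_sig (Hk y)))).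
    split.
    + intros x [O1 [O2 [HO1 [HO2 [O1x [O2x Hy]]]]]].
      exists O1, O2. repeat split; auto. intros x' O1x' O2x'. exists O1, O2; repeat split; auto.
    + intros y. split.
      * intros Wy. destruct (Hk y) as [t [Hb Hh]] eqn:Ekt. simpl in Wy.
        destruct t as [[[b j] g] [Hj Hbj]]. unfold tot_b in Hb; simpl in Hb.
        unfold hv, tot_j, tot_b, tot_g in Hh; simpl in Hh.
        destruct (HW j g Hj) as [O [HO HOb]].
        assert (Ob : O b) by (apply (HOb b Hbj); exact Wy).
        destruct (Htube j g b Hj Hbj) as [N [O2 [HN [HO2 [Nb [O2z Ht]]]]]].
        exists (fun b' => (N b' /\ U j b') /\ O b'), O2. split; [|split; [exact HO2|split; [|split]]].
        -- apply open_inter; [exact HT| apply open_inter; auto| exact HO].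
        -- rewrite <- Hb. auto.
        -- rewrite <- Hh. exact O2z.
        -- intros y' [[Nb' Ub'] Ob'] O2y'.
           destruct (Hk y') as [t' [Hb' Hh']]; simpl.
           destruct y' as [[b' z'] Hy']; simpl in *.
           assert (Ez : z' = act (c j b') g) by (apply Ht; auto).
           rewrite (Hcls t' (exist _ (b', j, g) (conj Hj Ub'))).
           ++ apply (HOb b' Ub'). exact Ob'.
           ++ rewrite Hb'. reflexivity.
           ++ rewrite Hh', Ez. reflexivity.
      * intros [O1 [O2 [_ [_ [O1y [O2y Hy]]]]]]. apply Hy; assumption.
  - intros x. reflexivity.
  - intros x m. unfold peta_act. simpl. destruct (Hrc (tot_shift (peta_rep x) m)) as [E1 E2].
    rewrite E1, E2. unfold hv, tot_shift, tot_b, tot_j, tot_g; simpl. rewrite Hact. reflexivity.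
Qed.


Lemma Dn_extend N M v w : (N <= M)%nat -> (forall k, (N <= k)%nat -> v k = C0) ->
  (forall k, (N <= k)%nat -> w k = C0) -> Dn M v w = Dn N v w.
Proof. intros HNM Hv Hw. unfold Dn. apply rsum_extend; [exact HNM|].
  intros k Hk. unfold Vsub. rewrite Hv, Hw by exact Hk. unfold Cnorm2, C0; simpl; ring. Qed.

Lemma sphere_ball n (O : Sphere n -> Prop) z : sphere_top n O -> O z ->
  exists e, 0 < e /\ forall w, Dn n (proj1_sig w) (proj1_sig z) < e * e -> O w.
Proof. intros HO Oz. destruct (HO z Oz) as [e [He H]]. exists e; split; [exact He|].
  intros w Hw. apply H. apply sqrt_lt_sq; [apply Dn_nonneg|exact He|exact Hw]. Qed.

Lemma tube_core n q c v v0 g g' : 0 < c ->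
  (forall v a b, on_sphere n v -> (a < q)%nat -> (b < q)%nat -> a <> b -> c <= Dn n (rot q a v) (rot q b v)) ->
  on_sphere n v -> (g < q)%nat -> (g' < q)%nat ->
  Dn n v v0 < c / 4 -> Dn n (rot q g' v) (rot q g v0) < c / 4 -> g' = g.
Proof.
  intros Hc Hsep Hv Hg Hg' H1 H2.
  destruct (Nat.eq_dec g' g) as [E|Hne]; [exact E|exfalso].
  pose proof (Hsep v g' g Hv Hg' Hg Hne).
  pose proof (Dn_tri2 n (rot q g' v) (rot q g v0) (rot q g v)).
  rewrite (Dn_sym n (rot q g v0) (rot q g v)), (Dn_rot n q g v v0) in H0. lra.
Qed.


Theorem mainTheorem2 (B : Type) (TB : topology B) (n q : nat)
  (U : nat -> B -> Prop) (phi : nat -> B -> R) (eta : nat -> nat -> Zq q) :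
  is_topology TB ->
  (0 < q)%nat ->
  (forall j, (j < n)%nat -> TB (U j)) ->
  (forall b, exists j, (j < n)%nat /\ U j b) ->
  (forall j, (j < n)%nat -> continuous TB R_top (phi j)) ->
  (forall j b, (j < n)%nat -> 0 <= phi j b <= 1) ->
  (forall b, rsum n (fun j => phi j b) = 1) ->
  (forall j b, (j < n)%nat -> ~ U j b -> phi j b = 0) ->
  is_cocycle n q U eta ->
  exists f : B -> Lens n q,
    (forall b j, (j < n)%nat -> U j b ->
       exists z : Sphere n, proj1_sig z = chart_vec n q U phi eta j b /\
                            f b = lens_p n q z) /\
    continuous TB (lens_top n q) f /\
    iso_to_pullback TB (peta_top TB n q U eta) peta_proj peta_act
      (sphere_top n) sph_act (lens_p n q) f /\
    iso_to_pullback TB (peta_top TB n q U eta) peta_proj peta_act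
      sphinf_top sphinf_act (lensinf_p q) (fun b => lens_incl (f b)).
Proof.
  intros HT Hq HU Hcov Hcont Hrange Hsum Hout Hcoc.
  assert (Hpos : forall k b, (k < n)%nat -> 0 <= phi k b) by (intros; apply Hrange; auto).
  assert (jb : forall b, {j | (j < n)%nat /\ U j b}) by (intros b; apply constructive_indefinite_description, Hcov).
  set (cS := fun j b => match excluded_middle_informative (U j b) with
     | left H => exist (on_sphere n) (chart_vec n q U phi eta j b)
                   (chart_on_sphere n q U phi eta j b Hpos Hsum Hout H)
     | right _ => exist (on_sphere n) (chart_vec n q U phi eta (proj1_sig (jb b)) b)
                   (chart_on_sphere n q U phi eta _ b Hpos Hsum Hout (proj2 (proj2_sig (jb b))))
     end : Sphere n).
  assert (HcS : forall j b, U j b -> proj1_sig (cS j b) = chart_vec n q U phi eta j b).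
  { intros j b H. unfold cS. destruct (excluded_middle_informative (U j b)); [reflexivity|contradiction]. }
  set (z0 := zq_zero q Hq).
  set (f := fun b => lens_p n q (cS (proj1_sig (jb b)) b)).
  assert (Hact := sph_act_comp n q Hq).
  assert (Hact0 := sph_act_zero n q Hq).
  assert (Horb : forall z w : Sphere n, lens_p n q z = lens_p n q w <-> exists g : Zq q, z = sph_act w g).
  { intros. apply (orb_map_eq _ Hq); assumption. }
  assert (Hrel : forall j l b, (j < n)%nat -> (l < n)%nat -> U j b -> U l b ->
      cS l b = sph_act (cS j b) (eta l j)).
  { intros j l b Hj Hl Hjb Hlb. apply sig_eq. simpl. rewrite !HcS by assumption.
    apply chart_change; assumption. }
  assert (Hpf : forall j b (g : Zq q), (j < n)%nat -> U j b -> lens_p n q (sph_act (cS j b) g) = f b).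
  { intros j b g Hj Hb. unfold f. destruct (jb b) as [j0 [Hj0 Hb0]]; simpl.
    apply Horb. rewrite (Hrel j0 j b Hj0 Hj Hb0 Hb), Hact. eexists; reflexivity. }
  assert (Hglue : forall j k b (g : Zq q), (j < n)%nat -> (k < n)%nat -> U j b -> U k b ->
      sph_act (cS j b) g = sph_act (cS k b) (zq_add g (eta j k))).
  { intros j k b g Hj Hk Hjb Hkb. rewrite (Hrel j k b Hj Hk Hjb Hkb), Hact. f_equal.
    apply zq_eq. destruct Hcoc as [_ [Hc2 _]].
    pose proof (Hc2 j k Hj Hk ltac:(exists b; auto)) as E.
    destruct g as [g Hg]; simpl. destruct (eta k j) as [a Ha], (eta j k) as [d Hd]; simpl in *.
    rewrite Nat.Div0.add_mod_idemp_r.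
    replace (a + (g + d))%nat with (g + (a + d))%nat by lia.
    rewrite <- Nat.Div0.add_mod_idemp_r, E, Nat.add_0_r. symmetry; apply Nat.mod_small; exact Hg. }
  assert (Hinj : forall j b (g g' : Zq q), (j < n)%nat -> U j b -> sph_act (cS j b) g = sph_act (cS j b) g' -> g = g').
  { intros j b g g' Hj Hb E. apply zq_eq. apply (f_equal (@proj1_sig _ _)) in E. simpl in E.
    apply (rot_inj n q (proj1_sig (cS j b))); [exact (proj2_sig (cS j b))| exact (proj2_sig g)| exact (proj2_sig g')| exact E]. }
  assert (Hsurj : forall j b z, (j < n)%nat -> U j b -> lens_p n q z = f b -> exists g : Zq q, z = sph_act (cS j b) g).
  { intros j b z Hj Hb E. unfold f in E. destruct (jb b) as [j0 [Hj0 Hb0]]; simpl in E.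
    apply Horb in E. destruct E as [g1 ->]. rewrite (Hrel j j0 b Hj Hj0 Hb Hb0), Hact. eexists; reflexivity. }
  assert (Hvec : forall j b (g : Zq q), U j b -> proj1_sig (sph_act (cS j b) g) = rot q (proj1_sig g) (chart_vec n q U phi eta j b)).
  { intros j b g H. simpl. rewrite HcS by exact H. reflexivity. }
  assert (Hcont_s : forall j (g : Zq q) b0 O2, (j < n)%nat -> U j b0 -> sphere_top n O2 -> O2 (sph_act (cS j b0) g) ->
      exists N, TB N /\ N b0 /\ forall b, N b -> U j b -> O2 (sph_act (cS j b) g)).
  { intros j g b0 O2 Hj Hb0 HO2 O2z.
    destruct (sphere_ball n O2 _ HO2 O2z) as [e [He Hball]].
    destruct (chart_cont TB n q U phi eta j HT Hcont Hpos b0 (e * e)) as [N [HN [Nb HNb]]]; [nra|].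
    exists N; split; [exact HN|]; split; [exact Nb|]. intros b Nb' Ub. apply Hball.
    rewrite !Hvec by assumption. rewrite Dn_rot. apply HNb; exact Nb'. }
  destruct (rot_sep n q) as [csep [Hcsep Hsep]].
  assert (Hcore : forall j b b0 (g g' : Zq q), U j b -> (j < n)%nat -> U j b0 ->
     Dn n (chart_vec n q U phi eta j b) (chart_vec n q U phi eta j b0) < csep / 4 ->
     Dn n (rot q (proj1_sig g') (chart_vec n q U phi eta j b)) (proj1_sig (sph_act (cS j b0) g)) < csep / 4 ->
     g' = g).
  { intros j b b0 g g' Ub Hj Ub0 H1 H2. apply zq_eq.
    rewrite Hvec in H2 by exact Ub0.
    apply (tube_core n q csep (chart_vec n q U phi eta j b) (chart_vec n q U phi eta j b0)); auto.
    - rewrite <- HcS by exact Ub. exact (proj2_sig (cS j b)).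
    - exact (proj2_sig g).
    - exact (proj2_sig g'). }
  assert (Hcc : forall j b0, exists N, TB N /\ N b0 /\ forall b, N b ->
      Dn n (chart_vec n q U phi eta j b) (chart_vec n q U phi eta j b0) < csep / 4).
  { intros j b0. apply chart_cont; auto. lra. }
  assert (iso1 : iso_to_pullback TB (peta_top TB n q U eta) peta_proj peta_act
      (sphere_top n) sph_act (lens_p n q) f).
  { apply (generic_iso TB n q U eta (sphere_top n) sph_act (lens_p n q) f cS); auto.
    intros j g b0 Hj Hb0.
    destruct (Hcc j b0) as [N [HN [Nb HNb]]].
    set (v0 := proj1_sig (sph_act (cS j b0) g)).
    exists N, (fun w : Sphere n => Dn n (proj1_sig w) v0 < csep / 4).
    split; [exact HN|]. split; [apply ball_open|]. split; [exact Nb|]. split.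
    - unfold v0. unfold Dn. rewrite (rsum_ext n _ (fun _ => 0)).
      + assert (rsum n (fun _ => 0) = 0) by (clear; induction n; simpl; [reflexivity| rewrite IHn; ring]).
        lra.
      + intros k _. unfold Vsub, Cnorm2; simpl. ring.
    - intros b z Nb' Ub Hz Epz.
      destruct (Hsurj j b z Hj Ub Epz) as [g' ->].
      f_equal. apply (Hcore j b b0 g g' Ub Hj Hb0); [apply HNb; exact Nb'|].
      rewrite <- Hvec by exact Ub. exact Hz. }
  exists f. split; [|split; [|split]].
  - intros b j Hj Hb. exists (cS j b). split; [apply HcS; exact Hb|].
    rewrite <- (Hpf j b z0 Hj Hb). unfold z0. rewrite Hact0. reflexivity.
  - intros V HV. unfold lens_top, quotient_top in HV.
    apply open_local; [exact HT|]. intros b0 Vb0.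
    destruct (jb b0) as [j0 [Hj0 Hb0]] eqn:Ejb.
    assert (O2z : V (lens_p n q (sph_act (cS j0 b0) z0))) by (rewrite (Hpf j0 b0 z0 Hj0 Hb0); exact Vb0).
    destruct (Hcont_s j0 z0 b0 (fun z => V (lens_p n q z)) Hj0 Hb0 HV O2z) as [N [HN [Nb HNb]]].
    exists (fun b => N b /\ U j0 b). split; [apply open_inter; auto|]. split; [auto|].
    intros b [Nb' Ub]. rewrite <- (Hpf j0 b z0 Hj0 Ub). apply HNb; assumption.
  - exact iso1.
  - set (cI := fun j b => sph_incl (cS j b)).
    assert (HactI := sphinf_act_comp q Hq).
    assert (HactI0 := sphinf_act_zero q Hq).
    assert (HorbI : forall z w : SphereInf, lensinf_p q z = lensinf_p q w <-> exists g : Zq q, z = sphinf_act w g).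
    { intros. apply (orb_map_eq _ Hq); assumption. }
    assert (Hsame : forall w (g : Zq q), lensinf_p q (sphinf_act w g) = lensinf_p q w).
    { intros w g. apply HorbI. exists g; reflexivity. }
    assert (Hr : forall j b, (j < n)%nat -> U j b -> exists g2 : Zq q,
        lens_incl (f b) = lensinf_p q (sphinf_act (cI j b) g2)).
    { intros j b Hj Hb. unfold lens_incl.
      pose proof (orb_rep_spec sph_act (f b)) as E.
      destruct (Hsurj j b (orb_rep (f b)) Hj Hb E) as [g2 E2].
      exists g2. rewrite E2, incl_act. reflexivity. }
    apply (generic_iso TB n q U eta sphinf_top sphinf_act (lensinf_p q) (fun b => lens_incl (f b)) cI); auto.
    + intros j b g Hj Hb. destruct (Hr j b Hj Hb) as [g2 E]. rewrite E, !Hsame. reflexivity.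
    + intros j k b g Hj Hk Hjb Hkb. unfold cI. rewrite <- !incl_act. f_equal. apply Hglue; auto.
    + intros j b g g' Hj Hb E. unfold cI in E. rewrite <- !incl_act in E. apply (Hinj j b); auto.
      apply sig_eq. exact (f_equal (@proj1_sig _ _) E).
    + intros j b z Hj Hb E. destruct (Hr j b Hj Hb) as [g2 E2]. rewrite E2 in E.
      apply HorbI in E. destruct E as [g1 ->]. rewrite HactI. eexists; reflexivity.
    + intros j g b0 O2 Hj Hb0 HO2 O2z. unfold cI in *. rewrite <- incl_act in O2z.
      destruct (Hcont_s j g b0 (fun w => O2 (sph_incl w)) Hj Hb0 (HO2 n) O2z) as [N [HN [Nb HNb]]].
      exists N; split; [exact HN|]; split; [exact Nb|]. intros b Nb' Ub. rewrite <- incl_act. apply HNb; auto.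
    + intros j g b0 Hj Hb0.
      destruct (Hcc j b0) as [N [HN [Nb HNb]]].
      set (v0 := proj1_sig (sph_act (cS j b0) g)).
      assert (Hv0 : forall k, (n <= k)%nat -> v0 k = C0) by (exact (proj1 (proj2_sig (sph_act (cS j b0) g)))).
      exists N, (fun z : SphereInf => exists M, (n <= M)%nat /\ (forall k, (M <= k)%nat -> proj1_sig z k = C0) /\
          Dn M (proj1_sig z) v0 < csep / 4).
      split; [exact HN|]. split; [|split; [exact Nb|split]].
      * intros m w [M [HnM [Hvan HD]]].
        destruct (ball_num (Dn M (proj1_sig w) v0) (csep / 4)) as [e [He Hb]].
        { split; [apply Dn_nonneg| exact HD]. }
        exists e; split; [exact He|]. intros w' Hw'.
        assert (Hw'v : forall k, (m <= k)%nat -> proj1_sig w' k = C0) by exact (proj1 (proj2_sig w')).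
        assert (Hwv : forall k, (m <= k)%nat -> proj1_sig w k = C0) by exact (proj1 (proj2_sig w)).
        exists (Nat.max M m). split; [lia|]. split.
        { intros k Hk. apply Hw'v. lia. }
        apply (Hb (Dn m (proj1_sig w') (proj1_sig w))); [apply Dn_nonneg| exact Hw'|].
        intros s Hs. pose proof (Dn_tri (Nat.max M m) s (proj1_sig w') (proj1_sig w) v0 Hs) as T.
        simpl in T |- *.
        rewrite (Dn_extend M (Nat.max M m) (proj1_sig w) v0) in T; [| lia | exact Hvan | intros k Hk; apply Hv0; lia].
        rewrite (Dn_extend m (Nat.max M m) (proj1_sig w') (proj1_sig w)) in T; [exact T| lia | exact Hw'v | exact Hwv].
      * exists n. split; [lia|]. split; [exact Hv0|].
        unfold Dn. rewrite (rsum_ext n _ (fun _ => 0)).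
        -- assert (rsum n (fun _ => 0) = 0) by (clear; induction n; simpl; [reflexivity| rewrite IHn; ring]).
           lra.
        -- intros k _. unfold Vsub, Cnorm2; simpl. ring.
      * intros b z Nb' Ub [M [HnM [Hvan HD]]] Epz.
        destruct (Hr j b Hj Ub) as [g2 E2]. rewrite E2 in Epz.
        apply HorbI in Epz. destruct Epz as [g1 ->]. rewrite HactI in HD |- *.
        f_equal. apply (Hcore j b b0 g (zq_add g2 g1) Ub Hj Hb0); [apply HNb; exact Nb'|].
        rewrite <- Hvec by exact Ub. fold v0.
        rewrite <- (Dn_extend n M); [exact HD | exact HnM | exact (proj1 (proj2_sig (sph_act (cS j b) (zq_add g2 g1)))) | exact Hv0].
Qed.
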